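(* Let $K$ be a field, let $n\geq 2$ and $m\geq 2$ be integers such that $\operatorname{char}(K)$ does not divide $n$, and let $f(x_1,\dots,x_m)\in K\langle x_1,\dots,x_m\rangle$ be a nonzero multilinear polynomial. If $n\geq \frac{m+1}{2}$, then the $K$-linear span of $f(M_n(K))$ contains $sl_n(K)$.
   Context: $K\langle x_1,\dots,x_m\rangle$ is the free associative algebra on noncommuting variables $x_1,\dots,x_m$. A polynomial is multilinear if it has the form $\sum_{\sigma\in S_m}\alpha_\sigma x_{\sigma(1)}\cdots x_{\sigma(m)}$ with $\alpha_\sigma\in K$. $M_n(K)$ is the algebra of $n\times n$ matrices over $K$, $f(M_n(K))=\{f(a_1,\dots,a_m): a_i\in M_n(K)\}$ is the image of $f$ on $M_n(K)$, and $sl_n(K)$ is the set of trace zero matrices in $M_n(K)$. *)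

(* Defs.v *)
From HB Require Import structures.
From mathcomp Require Import all_boot all_order all_algebra all_fingroup.
Set Implicit Arguments. Unset Strict Implicit. Unset Printing Implicit Defensive.
Import GRing.Theory.
Local Open Scope ring_scope.

(* A multilinear polynomial f = \sum_{s in S_m} alpha_s x_{s(0)} ... x_{s(m-1)}
   in K<x_0,...,x_{m-1}> is represented by its coefficient family alpha.
   Distinct permutations give distinct monomials, so f <> 0 iff some alpha_s <> 0. *)
Definition multilin_eval (K : fieldType) (m n : nat) (alpha : {ffun 'S_m -> K})
  (a : 'I_m -> 'M[K]_n) : 'M[K]_n :=
  \sum_(s : 'S_m) alpha s *: \big[mulmx/1%:M]_(i < m) a (s i).

(* Main.v *)
Require Import Defs.
From HB Require Import structures.
From mathcomp Require Import all_boot all_order all_algebra all_fingroup zify.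
Set Implicit Arguments. Unset Strict Implicit. Unset Printing Implicit Defensive.
Import GRing.Theory.

Lemma incr_id (f : nat -> nat) m' : (forall i, i < m' -> f i < f i.+1) -> f m' <= m' ->
  forall i, i <= m' -> f i = i.
Proof.
move=> inc fm.
have H : forall j, j <= m' -> forall i, i <= j -> f i + (j - i) <= f j.
  elim=> [|j IH] hj i hi.
    have -> : i = 0 by lia.
    by rewrite subnn addn0.
  case: (ltnP i j.+1) => hij.
    have := IH (ltnW hj) i hij; have := inc j hj; lia.
  have -> : i = j.+1 by lia.
  by rewrite subnn addn0.
move=> i hi; have := H m' (leqnn _) i hi; have := H i hi 0 (leq0n _); lia.
Qed.

Lemma half_arith a b d : d <= 1 -> (a.+1 + d)./2 = (b + d)./2 -> a != b -> a < b.
Proof. move=> hd; rewrite -!divn2 => e /eqP ne; lia. Qed.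

Local Open Scope ring_scope.

Section Helpers.
Variable K : fieldType.

Lemma chain_prod (n : nat) (p q : nat -> 'I_n) k j :
  \big[mulmx/(1%:M : 'M[K]_n)]_(i <- iota j k.+1) delta_mx (p i) (q i) =
  if all (fun i => q i == p i.+1) (iota j k) then delta_mx (p j) (q (j + k)%N) else 0.
Proof.
elim: k j => [|k IH] j.
  by rewrite big_cons big_nil mulmx1 /= addn0.
change (iota j k.+2) with (j :: iota j.+1 k.+1).
change (iota j k.+1) with (j :: iota j.+1 k).
rewrite big_cons IH [all _ (_ :: _)]/=.
case: (q j == p j.+1) /eqP => [e|ne]; case: (all _ _) => /=.
- by rewrite mul_delta_mx_cond e eqxx mulr1n addSnnS.
- by rewrite mulmx0.
- by rewrite mul_delta_mx_cond; case: eqP => // e; rewrite e in ne.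
- by rewrite mulmx0.
Qed.

Lemma conj_prod (n m : nat) (g h : 'M[K]_n) (a : 'I_m -> 'M[K]_n) :
  h *m g = 1%:M -> g *m h = 1%:M ->
  \big[mulmx/1%:M]_(i < m) (g *m a i *m h) = g *m (\big[mulmx/1%:M]_(i < m) a i) *m h.
Proof.
move=> hg gh; elim: m a => [|m IH] a.
  by rewrite !big_ord0 mulmx1.
rewrite !big_ord_recl IH.
by rewrite !mulmxA -[g *m a ord0 *m h *m g]mulmxA hg mulmx1.
Qed.

Lemma conj_eval (n m : nat) (alpha : {ffun 'S_m -> K}) (g h : 'M[K]_n) (a : 'I_m -> 'M[K]_n) :
  h *m g = 1%:M -> g *m h = 1%:M ->
  multilin_eval alpha (fun i => g *m a i *m h) = g *m multilin_eval alpha a *m h.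
Proof.
move=> hg gh; rewrite /multilin_eval mulmx_sumr mulmx_suml; apply: eq_bigr => s _.
by rewrite (conj_prod _ hg gh) -scalemxAr scalemxAl.
Qed.

Definition inspan (n m : nat) (alpha : {ffun 'S_m -> K}) (A : 'M[K]_n) :=
  exists (r : nat) (c : 'I_r -> K) (a : 'I_r -> 'I_m -> 'M[K]_n),
      A = \sum_(k < r) c k *: multilin_eval alpha (a k).

Local Open Scope nat_scope.
Lemma stair_prod (n m' : nat) (s0 s : 'S_m'.+1) (v : nat -> 'I_n)
  (vinj : forall x y, (x <= m'.+1./2)%N -> (y <= m'.+1./2)%N -> v x = v y -> x = y) :
  let d := (~~ odd m'.+1 : nat) in
  let w := fun j : nat => v ((j + d)./2) in
  \big[mulmx/(1%:M)%R]_(i < m'.+1) (delta_mx (w ((s0^-1)%g (s i))) (w ((s0^-1)%g (s i)).+1) : 'M[K]_n)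
  = if s == s0 then delta_mx (v 0) (v m'.+1./2) else 0%R.
Proof.
move=> d w.
have hd : d <= 1 by rewrite /d; case: odd.
pose tn := fun i : nat => val ((s0^-1)%g (s (inord i))).
have htn : forall i : 'I_m'.+1, tn i = (s0^-1)%g (s i) by move=> i; rewrite /tn inord_val.
rewrite (eq_bigr (fun i : 'I_m'.+1 => delta_mx (w (tn i)) (w (tn i).+1))); last first.
  by move=> i _; rewrite htn.
rewrite -(big_mkord xpredT (fun i => delta_mx (w (tn i)) (w (tn i).+1))) /index_iota subn0.
rewrite (chain_prod (fun i => w (tn i)) (fun i => w (tn i).+1)) add0n.
have tnlt : forall i, tn i < m'.+1 by move=> i; rewrite /tn ltn_ord.
have wm : w m'.+1 = v m'.+1./2.
  rewrite /w /d; congr v; case/boolP: (odd m'.+1) => h /=; first by rewrite addn0.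
  have E := odd_double_half m'.+1; rewrite (negbTE h) add0n -muln2 in E; change ((m' + 1).+1./2 = m'.+1./2); rewrite -!divn2; lia.
have w0 : w 0 = v 0 by rewrite /w; case: (d) hd => [|[]].
case: ifP => hch.
  have key : forall i, i <= m' -> tn i = i.
    apply: incr_id; last by have := tnlt m'; lia.
    move=> i him; apply: (half_arith (d := d)) => //.
      apply: vinj.
      - have := tnlt i; rewrite -!divn2; move: hd; lia.
      - have := tnlt i.+1; rewrite -!divn2; move: hd; lia.
      - by have /allP := hch; move=> /(_ i); rewrite mem_iota add0n => /(_ him) /eqP.
    rewrite /tn; apply/negP => /eqP /val_inj /perm_inj /perm_inj /(congr1 val).
    by move=> /=; rewrite !inordK //; lia.
  have -> : s = s0.
    apply/permP => x; have := key x; rewrite -ltnS ltn_ord htn => /(_ isT) /val_inj.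
    by move/(congr1 s0); rewrite permKV.
  by rewrite eqxx key // key // w0 wm.
case: eqP => // es; move: hch.
have key : forall i, i < m'.+1 -> tn i = i.
  by move=> i hi; rewrite /tn es permK /= inordK.
move=> /negbT /negP []; apply/allP => i; rewrite mem_iota add0n => /andP [_ hi].
rewrite !key //; lia.
Qed.
Local Open Scope ring_scope.

Section Span.
Variables (n m : nat) (alpha : {ffun 'S_m -> K}).

Lemma inspan0 : inspan alpha (0 : 'M[K]_n).
Proof. by exists 0%N, (fun _ => 0), (fun _ _ => 0); rewrite big_ord0. Qed.

Lemma inspanD (A B : 'M[K]_n) : inspan alpha A -> inspan alpha B -> inspan alpha (A + B).
Proof.
move=> [r1 [c1 [a1 ->]]] [r2 [c2 [a2 ->]]].
exists (r1 + r2)%N, (fun k => match split k with inl i => c1 i | inr j => c2 j end),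
  (fun k => match split k with inl i => a1 i | inr j => a2 j end).
rewrite big_split_ord /=; congr (_ + _); apply: eq_bigr => i _.
  by rewrite -[lshift _ _]/(unsplit (inl i)) unsplitK.
by rewrite -[rshift _ _]/(unsplit (inr i)) unsplitK.
Qed.

Lemma inspanZ (x : K) (A : 'M[K]_n) : inspan alpha A -> inspan alpha (x *: A).
Proof.
move=> [r [c [a ->]]]; exists r, (fun k => x * c k), a.
by rewrite scaler_sumr; apply: eq_bigr => k _; rewrite scalerA.
Qed.

Lemma inspanB (A B : 'M[K]_n) : inspan alpha A -> inspan alpha B -> inspan alpha (A - B).
Proof. by move=> hA hB; apply: inspanD => //; rewrite -scaleN1r; apply: inspanZ. Qed.

Lemma inspan_sum (I : finType) (F : I -> 'M[K]_n) : (forall i, inspan alpha (F i)) ->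
  inspan alpha (\sum_i F i).
Proof.
move=> h; apply: (big_ind (inspan alpha)) => //; [exact: inspan0 | exact: inspanD].
Qed.

Lemma inspan_conj (g h A : 'M[K]_n) : h *m g = 1%:M -> g *m h = 1%:M ->
  inspan alpha A -> inspan alpha (g *m A *m h).
Proof.
move=> hg gh [r [c [a ->]]]; exists r, c, (fun k i => g *m a k i *m h).
rewrite mulmx_sumr mulmx_suml; apply: eq_bigr => k _.
by rewrite (conj_eval _ _ hg gh) -scalemxAr -scalemxAl.
Qed.
End Span.

Lemma stair_span (n m' : nat) (alpha : {ffun 'S_m'.+1 -> K}) (s0 : 'S_m'.+1) (v : nat -> 'I_n)
  (vinj : forall x y, (x <= m'.+1./2)%N -> (y <= m'.+1./2)%N -> v x = v y -> x = y) :
  alpha s0 != 0 -> inspan alpha (delta_mx (v 0%N) (v m'.+1./2)).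
Proof.
move=> hs0.
pose d := (~~ odd m'.+1 : nat).
pose w := fun j : nat => v ((j + d)./2).
pose a := fun i : 'I_m'.+1 => (delta_mx (w ((s0^-1)%g i)) (w ((s0^-1)%g i).+1) : 'M[K]_n).
exists 1%N, (fun _ => (alpha s0)^-1), (fun _ => a).
rewrite big_ord1 /multilin_eval.
rewrite (eq_bigr (fun s => alpha s *: (if s == s0 then delta_mx (v 0%N) (v m'.+1./2) else 0))).
  rewrite (bigD1 s0) //= eqxx big1 ?addr0 ?scalerA ?mulVf ?scale1r //.
  by move=> s /negbTE ->; rewrite scaler0.
by move=> s _; rewrite /a (stair_prod s0 s vinj).
Qed.
End Helpers.

Lemma zmod_id (V : zmodType) (P Q R S : V) : P - Q = R - S - (R + Q - P - S).
Proof.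
by rewrite !opprB addrA subrK opprD addrCA ?addKr ?addNKr.
Qed.

Unset Implicit Arguments.
Set Strict Implicit.

Theorem theorem3p1 (K : fieldType) (n m : nat) (alpha : {ffun 'S_m -> K}) :
  (2 <= n)%N -> (2 <= m)%N ->
  (forall p : nat, p \in [pchar K] -> ~~ (p %| n)%N) ->
  (exists s : 'S_m, alpha s != 0) ->
  (m.+1 <= 2 * n)%N ->
  forall A : 'M[K]_n, \tr A = 0 ->
    exists (r : nat) (c : 'I_r -> K) (a : 'I_r -> 'I_m -> 'M[K]_n),
      A = \sum_(k < r) c k *: multilin_eval alpha (a k).
Proof.
move=> hn hm _ [s0 hs0] hmn A trA.
case: m alpha s0 hs0 hm hmn => [|m'] // alpha s0 hs0 hm hmn.
case: n A trA hn hmn => [|n'] // A trA hn hmn.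
pose k := m'.+1./2.
have k1 : (1 <= k)%N by rewrite /k -divn2; lia.
have kn : (k < n'.+1)%N by rewrite /k -divn2; lia.
have offd : forall x y : 'I_n'.+1, x != y -> inspan alpha (delta_mx x y).
  move=> x y xy.
  pose t1 := tperm (inord 0 : 'I_n'.+1) x.
  pose kk := t1 (inord k).
  pose t2 := tperm kk y.
  pose sg := (t1 * t2)%g.
  pose vf := fun t : nat => sg (inord t).
  have vinj : forall a b, (a <= m'.+1./2)%N -> (b <= m'.+1./2)%N -> vf a = vf b -> a = b.
    move=> a b ha hb /perm_inj /(congr1 val) /=; rewrite !inordK //; rewrite -/k; lia.
  have := stair_span vinj hs0.
  have kkx : kk != x.
    rewrite /kk -[X in _ != X](tpermL (inord 0 : 'I_n'.+1) x) -/t1 (inj_eq perm_inj).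
    apply/eqP => /(congr1 val) /=; rewrite !inordK //; lia.
  have -> : vf 0%N = x by rewrite /vf permM /t1 tpermL tpermD // eq_sym.
  have -> : vf m'.+1./2 = y by rewrite /vf permM -/k tpermL.
  done.
have diag : forall x y : 'I_n'.+1, x != y -> inspan alpha (delta_mx x x - delta_mx y y).
  move=> x y xy.
  pose E := (delta_mx y x : 'M[K]_n'.+1).
  have EE : E *m E = 0 by rewrite /E mul_delta_mx_0 // eq_sym.
  have hg : (1%:M - E) *m (1%:M + E) = 1%:M.
    by rewrite mulmxBl !mulmxDr !mul1mx mulmx1 EE addr0 addrK.
  have gh : (1%:M + E) *m (1%:M - E) = 1%:M.
    by rewrite mulmxDl !mulmxBr !mul1mx mulmx1 EE subr0 subrK.
  have G : (1%:M + E) *m delta_mx x y *m (1%:M - E) =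
      delta_mx x y + delta_mx y y - delta_mx x x - delta_mx y x.
    rewrite mulmxDl mul1mx /E mul_delta_mx mulmxBr mulmx1 mulmxDl !mul_delta_mx.
    by rewrite opprD addrA.
  rewrite (zmod_id _ _ (delta_mx x y) (delta_mx y x)) -G.
  apply: inspanB; first by apply: inspanB; apply: offd => //; rewrite eq_sym.
  by apply: inspan_conj => //; apply: offd.
pose X := fun i j : 'I_n'.+1 => if i == j then A i i *: (delta_mx i i - delta_mx 0 0)
                                 else A i j *: delta_mx i j.
have -> : A = \sum_i \sum_j X i j.
  rewrite (eq_bigr (fun i => \sum_j (A i j *: delta_mx i j - (if i == j then A i i *: delta_mx 0 0 else 0)))); last first.
    move=> i _; apply: eq_bigr => j _; rewrite /X.
    by case: eqP => [->|_]; rewrite ?scalerBr ?subr0.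
  rewrite (eq_bigr (fun i => \sum_j A i j *: delta_mx i j - A i i *: delta_mx 0 0)); last first.
    move=> i _; rewrite sumrB; congr (_ - _).
    rewrite (bigD1 i) //= eqxx big1 ?addr0 // => j /negbTE.
    by rewrite eq_sym => ->.
  rewrite sumrB -scaler_suml.
  have -> : \sum_i A i i = 0 by exact: trA.
  by rewrite scale0r subr0 -matrix_sum_delta.
apply: inspan_sum => i; apply: inspan_sum => j; rewrite /X.
case: eqP => [_|/eqP ij]; last by apply: inspanZ; apply: offd.
apply: inspanZ; case: (i =P 0) => [->|/eqP i0]; first by rewrite subrr; apply: inspan0.
exact: diag.
Qed.
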